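(* Let $\mathbf{A}\in\mathbb{R}^{M\times N}$, $\mathbf{Y}\in\mathbb{R}^{M\times L}$, and let $(\mathbf{g}(t),\mathbf{V}(t))$, $t\ge0$, evolve under the continuous gradient flow of $\mathcal{L}(\mathbf{g},\mathbf{V})=\Vert\mathbf{Y}-\mathbf{A}((\mathbf{g}^{\odot 2}\mathbf{1}_L)\odot\mathbf{V})\Vert_F^2$, and assume perfect row balancedness: $\frac12 g_i^2(t)=\sum_{j\in[L]}V_{ij}^2(t)$ for all $i\in[N]$ and all $t\ge0$. Let $\mathbf{X}(t)=(\mathbf{g}(t)^{\odot 2}\mathbf{1}_L)\odot\mathbf{V}(t)$, $\boldsymbol{\Lambda}(t)=\mathbf{A}^\top(\mathbf{Y}-\mathbf{A}\mathbf{X}(t))$ with $i$-th row $\boldsymbol{\lambda}_i(t)$, and $\hat{\mathbf{x}}_i(t)=\mathbf{X}_{i:}(t)/\Vert\mathbf{X}_{i:}(t)\Vert_2$ if $\mathbf{X}_{i:}(t)\neq\mathbf 0$, $\hat{\mathbf{x}}_i(t)=\mathbf{0}$ otherwise. Then the rate of change of the Euclidean norm of the $i$-th row of $\mathbf{X}(t)$ satisfies $$\frac{d}{dt}\Vert\mathbf{X}_{i:}(t)\Vert_2=2^{2/3}\cdot 6\,\langle\boldsymbol{\lambda}_i(t),\hat{\mathbf{x}}_i(t)\rangle\,\Vert\mathbf{X}_{i:}(t)\Vert_2^{4/3}.$$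
   Context: $\odot$ is the entrywise product and $\mathbf{1}_L$ the $1\times L$ all-ones row vector, so $X_{ij}=g_i^2V_{ij}$; $\mathbf{X}_{i:}$ is the $i$-th row. Gradient flow: $\frac{d}{dt}g_l=-\partial\mathcal{L}/\partial g_l$, $\frac{d}{dt}V_{lm}=-\partial\mathcal{L}/\partial V_{lm}$ along the curve. *)

(* Defs.v *)
From HB Require Import structures.
From mathcomp Require Import all_boot all_order all_algebra.
From mathcomp Require Import all_classical all_reals all_analysis.
Set Implicit Arguments. Unset Strict Implicit. Unset Printing Implicit Defensive.
Import Order.TTheory GRing.Theory Num.Theory.
Import numFieldNormedType.Exports.
Local Open Scope ring_scope.

Section Defs.
Variables (R : realType) (M N L : nat).
Variables (A : 'M[R]_(M, N)) (Y : 'M[R]_(M, L)).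

Definition Xof (g : 'I_N -> R) (V : 'I_N -> 'I_L -> R) : 'M[R]_(N, L) :=
  \matrix_(i < N, j < L) (g i ^+ 2 * V i j).

Definition loss (g : 'I_N -> R) (V : 'I_N -> 'I_L -> R) : R :=
  \sum_(m < M) \sum_(j < L) ((Y - A *m Xof g V) m j) ^+ 2.

Definition upd_g (g : 'I_N -> R) (l : 'I_N) (s : R) : 'I_N -> R :=
  fun k => if k == l then s else g k.

Definition upd_V (V : 'I_N -> 'I_L -> R) (l : 'I_N) (m : 'I_L) (s : R)
  : 'I_N -> 'I_L -> R :=
  fun k j => if (k == l) && (j == m) then s else V k j.

Definition dloss_dg g V (l : 'I_N) : R :=
  derive1 (fun s => loss (upd_g g l s) V) (g l).
Definition dloss_dV g V (l : 'I_N) (m : 'I_L) : R :=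
  derive1 (fun s => loss g (upd_V V l m s)) (V l m).

Definition Lam (X : 'M[R]_(N, L)) : 'M[R]_(N, L) := A^T *m (Y - A *m X).

Definition rownorm (X : 'M[R]_(N, L)) (i : 'I_N) : R :=
  Num.sqrt (\sum_(j < L) X i j ^+ 2).

Definition xhat (X : 'M[R]_(N, L)) (i : 'I_N) (j : 'I_L) : R :=
  if rownorm X i != 0 then X i j / rownorm X i else 0.
End Defs.

(* Main.v *)
Require Import Defs.
From HB Require Import structures.
From mathcomp Require Import all_boot all_order all_algebra.
From mathcomp Require Import all_classical all_reals all_analysis.
From mathcomp Require Import ring lra.
Import Order.TTheory GRing.Theory Num.Theory.
Import numFieldNormedType.Exports.
Local Open Scope classical_set_scope.
Local Open Scope ring_scope.


Lemma cube_der0 (R : realType) :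
  is_derive (0:R) 1 (fun y : R => `|y| ^+ 3) 0.
Proof.
have C : (fun h : R => h^-1 *: (((fun y : R => `|y| ^+ 3) \o shift 0) (h *: 1) - `|0:R| ^+ 3))
   @ (0:R)^' --> (0:R).
  have H0 : (fun h : R => h * `|h|) @ (0:R) --> (0 * `|0:R|).
    apply: cvgM; [exact: cvg_id | apply: cvg_norm; exact: cvg_id].
  rewrite normr0 mul0r in H0.
  have H1 : (fun h : R => h * `|h|) @ (0:R)^' --> (0:R) := cvg_trans (cvg_fmap2 (@nbhs_dnbhs _ (0:R))) H0.
  apply: cvg_trans; last exact: H1.
  apply: near_eq_cvg; near=> h.
  have hn0 : h != 0 by near: h; exact: nbhs_dnbhs_neq.
  rewrite /= /shift addr0 scaler1 normr0 expr0n /= subr0.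
  rewrite exprS real_normK ?num_real /=; last done.
  change (h * `|h| = h^-1 * (`|h| * h ^+ 2)); by field.
split; first by apply/cvg_ex; exists 0.
exact: cvg_lim.
Unshelve. all: by end_near.
Qed.

Lemma cube_poly_der (R : realType) (c x : R) :
  is_derive x 1 (fun y : R => c * y ^+ 3) (c * (3 * x ^+ 2)).
Proof.
have -> : (fun y : R => c * y ^+ 3) = horner (c%:P * 'X^3).
  by apply/funext => y; rewrite hornerM hornerC hornerXn.
apply: (is_derive_eq (is_derive_poly _ _)).
rewrite derivM derivC derivXn /= !(hornerD, hornerM, hornerC, hornerMn, hornerXn, mul0r, add0r).
rewrite hornerX; ring.
Qed.

Lemma cube_der (R : realType) (x : R) :
  is_derive x 1 (fun y : R => `|y| ^+ 3) (3 * x * `|x|).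
Proof.
have [x0|x0|->] := ltgtP x 0.
- have D : is_derive x 1 (fun y : R => (-1) * y ^+ 3) (3 * x * `|x|).
    apply: (is_derive_eq (@cube_poly_der R _ x)).
    rewrite ltr0_norm //; ring.
  apply: (near_eq_is_derive _ D).
  near=> y; have y0 : y < 0 by near: y; exact: lt_nbhsl.
  by rewrite ltr0_norm // exprNn; ring.
- have D : is_derive x 1 (fun y : R => 1 * y ^+ 3) (3 * x * `|x|).
    apply: (is_derive_eq (@cube_poly_der R _ x)).
    rewrite gtr0_norm //; ring.
  apply: (near_eq_is_derive _ D).
  near=> y; have y0 : 0 < y by near: y; exact: lt_nbhsr.
  by rewrite gtr0_norm // mul1r.
- apply: is_derive_eq; first exact: cube_der0.
  by rewrite normr0 !mulr0.
Unshelve. all: by end_near.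
Qed.
Lemma term_der (R : realType) (a b c x : R) :
  is_derive x 1 (fun s : R => (a + b * (c - s ^+ 2)) ^+ 2)
    (2 * (a + b * (c - x ^+ 2)) * (b * (- (2 * x)))).
Proof.
pose q : {poly R} := ((a + b * c)%:P - b%:P * 'X^2) ^+ 2.
have -> : (fun s : R => (a + b * (c - s ^+ 2)) ^+ 2) = horner q.
  apply/funext => s; rewrite /q horner_exp hornerD hornerN hornerM !hornerC hornerXn.
  congr (_ ^+ 2); ring.
apply: (is_derive_eq (is_derive_poly _ _)).
rewrite /q deriv_exp derivB derivC derivM derivC derivXn /= !(hornerMn, hornerM, hornerD, hornerN, hornerC, hornerXn, hornerX, expr1, horner_exp). ring.

Qed.

Lemma is_derive_sumf (R : realType) (n : nat) (F : 'I_n -> R -> R) (dF : 'I_n -> R) (x : R) :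
  (forall i, is_derive x (1:R) (F i) (dF i)) ->
  is_derive x 1 (fun s => \sum_(i < n) F i s) (\sum_(i < n) dF i).
Proof.
move=> H; rewrite -fct_sumE; exact: is_derive_sum.
Qed.

Lemma dg_formula (R : realType) (M N L : nat) (A : 'M[R]_(M, N)) (Y : 'M[R]_(M, L))
  g V (l : 'I_N) :
  dloss_dg A Y g V l = -4 * g l * \sum_(j < L) Lam A Y (Xof g V) l j * V l j.
Proof.
set E := Y - A *m Xof g V.
have key : forall s, loss A Y (upd_g g l s) V =
  \sum_(m < M) \sum_(j < L) (E m j + (A m l * V l j) * (g l ^+ 2 - s ^+ 2)) ^+ 2.
  move=> s; rewrite /loss; apply: eq_bigr => m _; apply: eq_bigr => j _.
  congr (_ ^+ 2); rewrite /E !mxE (bigD1 l) //= [X in _ = _ - X + _](bigD1 l) //=.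
  rewrite !mxE /upd_g eqxx.
  have -> : \sum_(k < N | k != l) A m k * Xof (fun k0 : 'I_N => if k0 == l then s else g k0) V k j
          = \sum_(k < N | k != l) A m k * Xof g V k j.
    by apply: eq_bigr => k /negbTE kl; rewrite !mxE kl.
  ring.
rewrite /dloss_dg (funext key) derive1E.
set F := fun m j s => (E m j + (A m l * V l j) * (g l ^+ 2 - s ^+ 2)) ^+ 2.
have D : is_derive (g l) 1 (fun s => \sum_(m < M) \sum_(j < L) F m j s)
   (\sum_(m < M) \sum_(j < L) (2 * (E m j + A m l * V l j * (g l ^+ 2 - g l ^+ 2)) *
        (A m l * V l j * - (2 * g l)))).
  apply: is_derive_sumf => m; apply: is_derive_sumf => j; exact: term_der.
rewrite (@derive_val _ _ _ _ _ _ _ D).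
rewrite /Lam.
under eq_bigr do under eq_bigr do rewrite subrr mulr0 addr0.
rewrite exchange_big /= big_distrr /=; apply: eq_bigr => j _.
rewrite !mxE big_distrl big_distrr /=; apply: eq_bigr => m _.
rewrite !mxE /E; ring.
Qed.
Lemma pow_lemma (R : realType) (a : R) : 0 <= a ->
  (2 : R) `^ (2 / 3) * (a ^+ 3 * (Num.sqrt 2)^-1) `^ (4 / 3) = a ^+ 4.
Proof.
move=> a0.
have s0 : 0 < Num.sqrt (2:R) by rewrite sqrtr_gt0.
have -> : (2 : R) `^ (2 / 3) = (Num.sqrt 2) `^ (4 / 3).
  rewrite -powR12_sqrt; last by rewrite ler0n.
  by rewrite -powRrM; congr (_ `^ _); field.
rewrite -(powRM _ (ltW s0)); last by rewrite mulr_ge0 ?exprn_ge0 ?invr_ge0 ?(ltW s0).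
have -> : Num.sqrt 2 * (a ^+ 3 * (Num.sqrt (2:R))^-1) = a ^+ 3.
  by field; rewrite gt_eqF.
rewrite -(powR_mulrn 3 a0) -powRrM.
have -> : (3%:R * (4 / 3) : R) = 4%:R by field.
by rewrite powR_mulrn.
Qed.

Theorem lemma5p3 (R : realType) (M N L : nat)
  (A : 'M[R]_(M, N)) (Y : 'M[R]_(M, L))
  (g : R -> 'I_N -> R) (V : R -> 'I_N -> 'I_L -> R) :
  (* gradient flow (at every interior time t > 0) *)
  (forall t : R, 0 < t -> forall l : 'I_N,
      is_derive t 1 (fun s => g s l) (- dloss_dg A Y (g t) (V t) l)) ->
  (forall t : R, 0 < t -> forall (l : 'I_N) (m : 'I_L),
      is_derive t 1 (fun s => V s l m) (- dloss_dV A Y (g t) (V t) l m)) ->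
  (* perfect row balancedness *)
  (forall t : R, 0 <= t -> forall i : 'I_N,
      2^-1 * g t i ^+ 2 = \sum_(j < L) V t i j ^+ 2) ->
  forall (i : 'I_N) (t : R), 0 < t ->
    is_derive t 1 (fun s => rownorm (Xof (g s) (V s)) i)
      ((2 : R) `^ (2 / 3) * 6 *
       (\sum_(j < L) Lam A Y (Xof (g t) (V t)) i j * xhat (Xof (g t) (V t)) i j) *
       (rownorm (Xof (g t) (V t)) i) `^ (4 / 3)).
Proof.
move=> Hg _ Hbal i t t0.
set s2 := Num.sqrt (2:R).
have s2gt0 : 0 < s2 by rewrite sqrtr_gt0.
have s2n0 : s2 != 0 by rewrite gt_eqF.
have s2s2 : s2 * s2 = 2 by rewrite -expr2 sqr_sqrtr // ler0n.
have rn : forall s, 0 <= s -> rownorm (Xof (g s) (V s)) i = `|g s i| ^+ 3 * s2^-1.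
  move=> s s0; rewrite /rownorm.
  under eq_bigr do rewrite mxE exprMn.
  rewrite -big_distrr /= -Hbal //.
  have e6 : (`|g s i| ^+ 3) ^+ 2 = (g s i ^+ 2) ^+ 3.
    by rewrite -!exprM mulnC exprM real_normK ?num_real // exprM.
  have -> : (g s i ^+ 2) ^+ 2 * (2^-1 * g s i ^+ 2) = (`|g s i| ^+ 3) ^+ 2 * 2^-1.
    by rewrite e6; ring.
  rewrite sqrtrM ?exprn_ge0 // sqrtr_sqr ger0_norm ?exprn_ge0 // sqrtrV //.
set G := g t i.
set S := \sum_(j < L) Lam A Y (Xof (g t) (V t)) i j * V t i j.
have DG : is_derive t 1 (fun s => g s i) (4 * G * S).
  apply: (is_derive_eq (Hg t t0 i)).
  by rewrite dg_formula; rewrite /G /S; ring.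
have DC : is_derive G 1 (fun y : R => s2^-1 * `|y| ^+ 3) (s2^-1 * (3 * G * `|G|)).
  have -> : (fun y : R => s2^-1 * `|y| ^+ 3) = s2^-1 \*: (fun y : R => `|y| ^+ 3).
    by apply/funext.
  apply: is_deriveZ.
  exact: cube_der.
have D := is_derive1_comp DC DG.
apply: (near_eq_is_derive _ (is_derive_eq D _)).
  near=> s; have s0 : 0 < s by near: s; exact: lt_nbhsr.
  by rewrite /= rn ?(ltW s0) // mulrC.
rewrite rn ?(ltW t0) // -/G.
have [G0|G0] := eqVneq G 0.
  rewrite G0 normr0 !mulr0 !mul0r.
  rewrite big1 ?mulr0 ?mul0r // => j _.
  by rewrite /xhat rn ?(ltW t0) // -/G G0 normr0 expr0n mul0r eqxx mulr0.
have aG : 0 < `|G| by rewrite normr_gt0.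
have -> : \sum_(j < L) Lam A Y (Xof (g t) (V t)) i j * xhat (Xof (g t) (V t)) i j
    = G ^+ 2 * S / (`|G| ^+ 3 * s2^-1).
  rewrite /S big_distrr big_distrl /=; apply: eq_bigr => j _.
  rewrite /xhat rn ?(ltW t0) // -/G.
  have -> : (`|G| ^+ 3 * s2^-1 != 0) by rewrite mulf_neq0 ?invr_eq0 ?expf_neq0 ?gt_eqF.
  rewrite [Xof _ _ i j]mxE -/G; field.
  by rewrite s2n0 gt_eqF.
have P := @pow_lemma R _ (normr_ge0 G).
rewrite -/s2 in P.
have inv : s2^-1 = s2 / 2 by apply: (mulfI s2n0); rewrite mulrA s2s2 divff // mulfV.
rewrite (_ : 2 `^ (2 / 3) * 6 * (G ^+ 2 * S / (`|G| ^+ 3 / s2)) * (`|G| ^+ 3 / s2) `^ (4 / 3)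
   = 6 * (G ^+ 2 * S / (`|G| ^+ 3 / s2)) * (2 `^ (2 / 3) * (`|G| ^+ 3 / s2) `^ (4 / 3))); last by ring.
rewrite P {1}inv.
field.
by rewrite s2n0 gt_eqF.
Unshelve. all: by end_near.
Qed.
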